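(* Let $d,k$ be positive integers, let $\mathscr{A}\subseteq\mathbb{R}^d$, $\mathscr{B}\subseteq\mathbb{R}^k$, and let $\boldsymbol{f}:\mathscr{A}\to\mathbb{R}^k$. Let $\mathscr{X}$ be the family of all random vectors $X$ in $\mathbb{R}^d$ such that $\Pr\{X\in\mathscr{A}\}=1$ and $\mathbb{E}[\boldsymbol{f}(X)]\in\mathscr{B}$. Then for any (measurable) subset $\mathscr{C}$ of $\mathscr{A}$, \[ \sup_{X\in\mathscr{X}}\Pr\{X\in\mathscr{C}\}=\max\{P_i:1\le i\le k+1\}, \] where, for $i=1,\dots,k+1$, \[ P_i=\sup\Big\{\sum_{\ell=1}^i\theta_\ell:\ \theta_\ell\ge 0 \text{ for } 1\le\ell\le k+1,\ y_\ell\in\mathscr{C}\text{ for }1\le\ell\le i,\ y_\ell\in\mathscr{A}\setminus\mathscr{C}\text{ for } i<\ell\le k+1,\ \sum_{\ell=1}^{k+1}\theta_\ell=1,\ \sum_{\ell=1}^{k+1}\theta_\ell\boldsymbol{f}(y_\ell)\in\mathscr{B}\Big\}. \]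
   Context: All sets and functions involved are assumed measurable so that the probabilities and expectations make sense. The supremum of an empty set is defined to be $0$. *)

(* Defs.v *)
(* R^n is modelled as n.-tuple R, which the library
   equips with the product (= Borel) sigma-algebra (measurable_structure.v). *)
From HB Require Import structures.
From mathcomp Require Import all_boot all_order all_algebra.
From mathcomp Require Import all_classical all_reals all_analysis.
Set Implicit Arguments. Unset Strict Implicit. Unset Printing Implicit Defensive.
Import Order.TTheory GRing.Theory Num.Theory.
Local Open Scope classical_set_scope.
Local Open Scope ring_scope.

Definition expect_vec {dd : measure_display} {Omega : measurableType dd}
  {R : realType} (P : probability Omega R) (D : set Omega) (k : nat)
  (g : Omega -> k.-tuple R) : k.-tuple R :=
  [tuple fine (\int[P]_(w in D) (tnth (g w) j)%:E) | j < k].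

(* The values Pr{X in C} for X ranging over the family 𝒳 of all random vectors
   X (on any probability space) with Pr{X in A} = 1 and E[f(X)] in B
   (E[f(X)] existing, i.e. every component of f(X) integrable). *)
Definition prob_values {R : realType} (d k : nat)
  (A C : set (d.-tuple R)) (B : set (k.-tuple R))
  (f : d.-tuple R -> k.-tuple R) : set R :=
  [set p | exists (dd : measure_display) (Omega : measurableType dd)
             (P : probability Omega R) (X : Omega -> d.-tuple R),
     [/\ measurable_fun setT X,
         P (X @^-1` A) = 1%E,
         (forall j : 'I_k,
            P.-integrable (X @^-1` A) (fun w => (tnth (f (X w)) j)%:E)),
         B (expect_vec P (X @^-1` A) (fun w => f (X w)))
       & p = fine (P (X @^-1` C))]].

(* The set whose supremum is P_i (indices l = 0..k, "l < i" means 1 <= l+1 <= i). *)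
Definition Pi_values {R : realType} (d k : nat)
  (A C : set (d.-tuple R)) (B : set (k.-tuple R))
  (f : d.-tuple R -> k.-tuple R) (i : nat) : set R :=
  [set s | exists (theta : 'I_k.+1 -> R) (y : 'I_k.+1 -> d.-tuple R),
     (forall l, 0 <= theta l) /\
     [/\ 
         forall l : 'I_k.+1, (l < i)%N -> C (y l),
         forall l : 'I_k.+1, (i <= l)%N -> (A `\` C) (y l),
         \sum_(l < k.+1) theta l = 1,
         B [tuple \sum_(l < k.+1) theta l * tnth (f (y l)) j | j < k]
       & s = \sum_(l < k.+1 | (l < i)%N) theta l]].

(* P_i ; note that mathcomp's [sup] of an empty set is 0, as in the paper. *)
Definition Pval {R : realType} (d k : nat)
  (A C : set (d.-tuple R)) (B : set (k.-tuple R))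
  (f : d.-tuple R -> k.-tuple R) (i : nat) : R :=
  sup (Pi_values A C B f i).

(* Main.v *)
Require Import Defs.
From HB Require Import structures.
From mathcomp Require Import all_boot all_order all_algebra.
From mathcomp Require Import all_classical all_reals all_analysis.
Import Order.TTheory GRing.Theory Num.Theory.
Local Open Scope classical_set_scope.
Local Open Scope ring_scope.

Set Implicit Arguments. Unset Strict Implicit. Unset Printing Implicit Defensive.
From mathcomp Require Import lra ring measurable_realfun.
Section Sep.
Variable R : realType.

Definition dotv n (u x : 'I_n -> R) := \sum_(i < n) u i * x i.
Definition joinv n (x : 'I_n -> R) (t : R) : 'I_n.+1 -> R :=
  fun i => if unlift ord_max i is Some j then x j else t.
Definition hdv n (x : 'I_n.+1 -> R) : 'I_n -> R := fun j => x (lift ord_max j).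

Lemma joinv_lift n x t j : @joinv n x t (lift ord_max j) = x j.
Proof. by rewrite /joinv liftK. Qed.
Lemma joinv_max n x t : @joinv n x t ord_max = t.
Proof. by rewrite /joinv unlift_none. Qed.
Lemma joinvE n (x : 'I_n.+1 -> R) : joinv (hdv x) (x ord_max) = x.
Proof.
apply/funext => i; case: (unliftP ord_max i) => [j ->|->].
  by rewrite joinv_lift.
by rewrite joinv_max.
Qed.
Lemma hdv_joinv n x t : hdv (@joinv n x t) = x.
Proof. by apply/funext => j; rewrite /hdv joinv_lift. Qed.
Lemma dotvS n (u x : 'I_n.+1 -> R) :
  dotv u x = u ord_max * x ord_max + dotv (hdv u) (hdv x).
Proof. by rewrite /dotv (bigD1_ord ord_max). Qed.
Lemma dotvD n (u x y : 'I_n -> R) :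
  dotv u (fun i => x i + y i) = dotv u x + dotv u y.
Proof. by rewrite /dotv -big_split; apply: eq_bigr => i _; rewrite mulrDr. Qed.
Lemma dotvZ n (u x : 'I_n -> R) c :
  dotv u (fun i => c * x i) = c * dotv u x.
Proof. by rewrite /dotv mulr_sumr; apply: eq_bigr => i _; rewrite mulrCA. Qed.
Lemma dotv0 n (x : 'I_n -> R) : dotv (fun _ => 0) x = 0.
Proof. by rewrite /dotv big1 // => i _; rewrite mul0r. Qed.

Lemma sep n (C : ('I_n -> R) -> Prop) :
  (forall x y, C x -> C y -> C (fun i => x i + y i)) ->
  (forall t x, 0 < t -> C x -> C (fun i => t * x i)) ->
  (forall x, C x -> exists i, x i != 0) ->
  (forall x, ~ C x) \/
  exists u : 'I_n -> R, (exists i, u i != 0) /\ forall x, C x -> 0 <= dotv u x.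
Proof.
elim: n C => [|n IH] C Cadd Cscale Cnz.
  by left => x /Cnz [[]].
pose C0 := fun x' => C (joinv x' 0).
pose Ap := fun a => C (joinv a 1).
pose Am := fun b => C (joinv b (-1)).
have addJ x y s t : (fun i => joinv x s i + joinv y t i)
    = joinv (fun j => x j + y j) (s + t).
  by apply/funext => i; rewrite /joinv; case: unlift.
have scaleJ c x s : (fun i => c * joinv x s i) = joinv (fun j => c * x j) (c * s).
  by apply/funext => i; rewrite /joinv; case: unlift.
have C0add x y : C0 x -> C0 y -> C0 (fun i => x i + y i).
  by move=> hx hy; have := Cadd _ _ hx hy; rewrite addJ addr0.
have C0scale t x : 0 < t -> C0 x -> C0 (fun i => t * x i).
  by move=> t0 hx; have := Cscale _ _ t0 hx; rewrite scaleJ mulr0.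
have C0nz x : C0 x -> exists i, x i != 0.
  move=> /Cnz [i]; case: (unliftP ord_max i) => [j ->|->].
    by rewrite joinv_lift => ?; exists j.
  by rewrite joinv_max eqxx.
have decomp x : C x -> [/\ 0 < x ord_max -> Ap (fun j => (x ord_max)^-1 * hdv x j),
    x ord_max < 0 -> Am (fun j => (- x ord_max)^-1 * hdv x j)
  & x ord_max = 0 -> C0 (hdv x)].
  move=> Cx; split.
  - move=> t0; rewrite /Ap.
    have -> : (1 : R) = (x ord_max)^-1 * x ord_max by rewrite mulVf // gt_eqF.
    rewrite -scaleJ joinvE.
    by apply: Cscale => //; rewrite invr_gt0.
  - move=> t0; rewrite /Am.
    have -> : (-1 : R) = (- x ord_max)^-1 * x ord_max.
      by rewrite invrN mulNr mulVf ?ltr0_neq0.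
    rewrite -scaleJ joinvE; apply: Cscale => //; rewrite invr_gt0; lra.
  - by move=> t0; rewrite /C0 -t0 joinvE.
have [[a0 Ha0]|noAp] := pselect (exists a, Ap a); last first.
  right; exists (joinv (fun _ => 0) (-1)); split.
    by exists ord_max; rewrite joinv_max oppr_eq0 oner_eq0.
  move=> x Cx; rewrite dotvS hdv_joinv dotv0 joinv_max addr0.
  have [t0|] := ltrP 0 (x ord_max); last lra.
  by case: (decomp _ Cx) => hp _ _; exfalso; apply: noAp; eexists; apply: hp.
have [[b0 Hb0]|noAm] := pselect (exists b, Am b); last first.
  right; exists (joinv (fun _ => 0) 1); split.
    by exists ord_max; rewrite joinv_max oner_eq0.
  move=> x Cx; rewrite dotvS hdv_joinv dotv0 joinv_max addr0 mul1r.
  have [t0|//] := ltrP (x ord_max) 0.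
  by case: (decomp _ Cx) => _ hm _; exfalso; apply: noAm; eexists; apply: hm.
have Cab a b : Ap a -> Am b -> C0 (fun j => a j + b j).
  by move=> ha hb; have := Cadd _ _ ha hb; rewrite addJ subrr.
have [IHl|[u' [u'nz u'pos]]] := IH C0 C0add C0scale C0nz.
  by exfalso; apply: (IHl _ (Cab _ _ Ha0 Hb0)).
pose S := [set r | exists a, Ap a /\ r = - dotv u' a].
have Sub b : Am b -> ubound S (dotv u' b).
  move=> hb r [a [ha ->]]; have := u'pos _ (Cab _ _ ha hb); rewrite dotvD; lra.
have hsS : has_sup S by split; [exists (- dotv u' a0); exists a0 | exists (dotv u' b0); exact: Sub].
set c := sup S.
have cAp a : Ap a -> - dotv u' a <= c.
  by move=> ha; apply: sup_upper_bound => //; exists a.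
have cAm b : Am b -> c <= dotv u' b.
  by move=> hb; apply: ge_sup; [exists (- dotv u' a0); exists a0|exact: Sub].
right; exists (joinv u' c); split.
  by case: u'nz => i hi; exists (lift ord_max i); rewrite joinv_lift.
move=> x Cx; rewrite dotvS hdv_joinv joinv_max.
case: (decomp _ Cx) => hp hm hz.
have [t0|t0|t0] := ltgtP (x ord_max) 0.
- have h := cAm _ (hm t0); rewrite dotvZ in h.
  set D := dotv u' (hdv x) in h *; set t := x ord_max in h t0 *.
  have -> : D = (- t) * ((- t)^-1 * D) by rewrite mulrA mulfV ?mul1r // oppr_eq0 ltr0_neq0.
  move: h; set e := (- t)^-1 * D => h.
  have -> : c * t + - t * e = (- t) * (e - c) by ring.
  apply: mulr_ge0; lra.
- have h := cAp _ (hp t0); rewrite dotvZ in h.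
  set D := dotv u' (hdv x) in h *; set t := x ord_max in h t0 *.
  have -> : D = t * (t^-1 * D) by rewrite mulrA mulfV ?mul1r // gt_eqF.
  move: h; set e := t^-1 * D => h.
  have -> : c * t + t * e = t * (c + e) by ring.
  apply: mulr_ge0; lra.
- by rewrite t0 mulr0 add0r; apply: u'pos; apply: hz.
Qed.
End Sep.
Section Red.
Variable R : realType.

Lemma lindep r n (M : 'M[R]_(r, n)) : (n < r)%N ->
  exists mu : 'I_r -> R, (exists l, mu l != 0) /\
    forall i, \sum_(l < r) mu l * M l i = 0.
Proof.
move=> nr; set K := kermx M.
have rK : (0 < \rank K)%N.
  rewrite /K mxrank_ker subn_gt0; exact: (leq_ltn_trans (rank_leq_col M) nr).
have KN0 : K != 0 by rewrite -mxrank_eq0 -lt0n.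
have [a [b hab]] : exists a b, K a b != 0.
  apply: contrapT => H; move/eqP: KN0; apply.
  apply/matrixP => a b; rewrite [RHS]mxE; apply: contrapT => hb.
  by apply: H; exists a, b; apply/eqP.
exists (fun l => K a l); split; first by exists b.
move=> i; have h := congr1 (fun X : 'M[R]_(r, n) => X a i) (mulmx_ker M).
by rewrite /= !mxE in h; exact: h.
Qed.

Variables (T : eqType) (k : nat) (v : T -> 'I_k -> R) (c : T -> R).

Lemma reduce_step r (W : 'I_r -> R) (Y : 'I_r -> T) (mu : 'I_r -> R) :
  (forall l, 0 <= W l) -> (exists l, mu l != 0) -> \sum_l mu l = 0 ->
  (forall j, \sum_l mu l * v (Y l) j = 0) -> 0 <= \sum_l mu l * c (Y l) ->
  exists (W' : 'I_r -> R) (l0 : 'I_r),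
   [/\ forall l, 0 <= W' l, W' l0 = 0, \sum_l W' l = \sum_l W l,
       forall j, \sum_l W' l * v (Y l) j = \sum_l W l * v (Y l) j
     & \sum_l W l * c (Y l) <= \sum_l W' l * c (Y l)].
Proof.
move=> W0 [b hb] mu0 muv muc.
have [l1 hl1] : exists l, mu l < 0.
  apply: contrapT => H.
  have H' : forall l, true -> 0 <= mu l.
    by move=> l _; rewrite leNgt; apply/negP => h; apply: H; exists l.
  by move/eqP: hb; apply; apply: (psumr_eq0P H' mu0).
pose F l := W l / - mu l.
case: (@arg_minP _ R _ l1 (fun l => mu l < 0) F hl1) => l0 hl0 Hmin.
pose t := F l0.
have t0 : 0 <= t by rewrite /t /F divr_ge0 // oppr_ge0 ltW.
exists (fun l => W l + t * mu l), l0; split.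
- move=> l; have [ml|ml] := ltrP (mu l) 0.
    have := Hmin _ ml; rewrite -/t /F => h.
    have : t * (- mu l) <= W l / - mu l * - mu l.
      by apply: ler_wpM2r => //; rewrite oppr_ge0 ltW.
    rewrite mulfVK ?oppr_eq0 ?ltr0_neq0 //; lra.
  by apply: addr_ge0 => //; apply: mulr_ge0.
- rewrite /t /F invrN mulrN mulNr -mulrA mulVf ?ltr0_neq0 // mulr1; lra.
- by rewrite big_split /= -mulr_sumr mu0 mulr0 addr0.
- move=> j; under eq_bigr do rewrite mulrDl.
  rewrite big_split /=.
  have -> : \sum_i t * mu i * v (Y i) j = t * \sum_i mu i * v (Y i) j.
    by rewrite mulr_sumr; apply: eq_bigr => i _; rewrite mulrA.
  by rewrite muv mulr0 addr0.
- under [X in _ <= X]eq_bigr do rewrite mulrDl.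
  rewrite big_split /=.
  have -> : \sum_i t * mu i * c (Y i) = t * \sum_i mu i * c (Y i).
    by rewrite mulr_sumr; apply: eq_bigr => i _; rewrite mulrA.
  have := mulr_ge0 t0 muc; lra.
Qed.
End Red.

Section Red2.
Variable R : realType.
Variables (T : eqType) (k : nat) (v : T -> 'I_k -> R) (c : T -> R).

Lemma sum_seq_ord (x0 : R * T) (s : seq (R * T)) (F : R * T -> R) :
  \sum_(x <- s) F x = \sum_(l < size s) F (nth x0 s l).
Proof. by rewrite (big_nth x0) big_mkord. Qed.

Lemma reduce (s : seq (R * T)) : (forall x, x \in s -> 0 <= x.1) ->
  exists s', [/\ (forall x, x \in s' -> 0 <= x.1 /\ x.2 \in map snd s),
     (size s' <= k.+1)%N,
     \sum_(x <- s') x.1 = \sum_(x <- s) x.1,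
     (forall j, \sum_(x <- s') x.1 * v x.2 j = \sum_(x <- s) x.1 * v x.2 j)
   & \sum_(x <- s) x.1 * c x.2 <= \sum_(x <- s') x.1 * c x.2].
Proof.
move: {2}(size s) (leqnn (size s)) => N; elim: N s => [|N IH] s hs s0;
  (have [small|big] := leqP (size s) k.+1;
    [by exists s; split => // x xs; split; [exact: s0|exact: map_f]|]).
  by move: hs; rewrite leqn0 => /eqP hs; rewrite hs in big.
case: s hs s0 big => [//|x0 s1]; set S := x0 :: s1 => hs s0 big.
pose W (l : 'I_(size S)) := (nth x0 S l).1.
pose Y (l : 'I_(size S)) := (nth x0 S l).2.
have W0 l : 0 <= W l by apply: s0; apply: mem_nth.
pose M := \matrix_(l < size S, i < k.+1)
  (if unlift ord0 i is Some j then v (Y l) j else 1).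
have [mu [nz hM]] := lindep M big.
have hsum : \sum_l mu l = 0.
  by rewrite -[RHS](hM ord0); apply: eq_bigr => l _; rewrite mxE unlift_none mulr1.
have hv j : \sum_l mu l * v (Y l) j = 0.
  by rewrite -[RHS](hM (lift ord0 j)); apply: eq_bigr => l _; rewrite mxE liftK.
have [mu' [nz' hsum' hv' hc']] : exists mu' : 'I_(size S) -> R,
   [/\ exists l, mu' l != 0, \sum_l mu' l = 0,
       forall j, \sum_l mu' l * v (Y l) j = 0 & 0 <= \sum_l mu' l * c (Y l)].
  have [hc|hc] := lerP 0 (\sum_l mu l * c (Y l)).
    by exists mu; split.
  exists (fun l => - mu l); split.
  - by case: nz => l hl; exists l; rewrite oppr_eq0.
  - by rewrite sumrN hsum oppr0.
  - move=> j /=.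
    have -> : \sum_l - mu l * v (Y l) j = - \sum_l mu l * v (Y l) j.
      by rewrite -sumrN; apply: eq_bigr => l _; rewrite mulNr.
    by rewrite hv oppr0.
  - rewrite (eq_bigr (fun l => - (mu l * c (Y l)))); last by move=> l _; rewrite mulNr.
    by rewrite sumrN oppr_ge0 ltW.
have [W' [l0 [W'0 W'l0 W'sum W'v W'c]]] := reduce_step W0 nz' hsum' hv' hc'.
pose s2 := [seq (W' l, Y l) | l <- [seq l <- enum 'I_(size S) | l != l0]].
have sum2 (F : R * T -> R) : (forall y, F (0, y) = 0) ->
    \sum_(x <- s2) F x = \sum_l F (W' l, Y l).
  move=> F0; rewrite big_map big_filter [RHS](bigD1 l0) //= W'l0 F0 add0r.
  by rewrite big_enum_cond /=.
have sumS (F : R * T -> R) : \sum_(x <- S) F x = \sum_l F (W l, Y l).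
  by rewrite (sum_seq_ord x0); apply: eq_bigr => l _; rewrite /W /Y -surjective_pairing.
have size2 : (size s2 <= N)%N.
  rewrite size_map size_filter.
  have := count_predC (fun l => l != l0) (enum 'I_(size S)).
  have -> : count (predC (fun l => l != l0)) (enum 'I_(size S)) = 1%N.
    rewrite (eq_count (a2 := pred1 l0)); last by move=> l /=; rewrite negbK.
    by rewrite count_uniq_mem ?enum_uniq // mem_enum.
  by move=> h; rewrite -ltnS -addn1 h size_enum_ord.
have s20 x : x \in s2 -> 0 <= x.1 /\ x.2 \in map snd S.
  rewrite /s2 => /mapP [l _ ->]; split; first exact: W'0.
  exact: (map_f snd (mem_nth x0 (ltn_ord l))).
have [s' [s'0 s'size s'sum s'v s'c]] := IH s2 size2 (fun x hx => (s20 x hx).1).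
exists s'; split => //.
- move=> x /s'0 [x0' /mapP [y /s20 [_ ys] ->]]; split => //.
- by rewrite s'sum (sum2 (fun x => x.1)) // sumS.
- move=> j; rewrite s'v (sum2 (fun x => x.1 * v x.2 j)) /=; last by move=> y; rewrite mul0r.
  by rewrite W'v sumS.
- rewrite (le_trans _ s'c) // (sum2 (fun x => x.1 * c x.2)) /=; last by move=> y; rewrite mul0r.
  by rewrite sumS.
Qed.
End Red2.
Section Hull.
Variable R : realType.
Context {dd : measure_display} (Om : measurableType dd) (P : probability Om R).

Lemma nonempty_full (D : set Om) : P D = 1%E -> exists w, D w.
Proof.
move=> PD; apply: contrapT => H.
have D0 : D = set0 by apply/seteqP; split => // x Dx; apply: H; exists x.
by move: PD; rewrite D0 measure0 => -[] /eqP; rewrite eq_sym oner_eq0.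
Qed.

Lemma hull n (D : set Om) (g : Om -> 'I_n -> R) : measurable D -> P D = 1%E ->
  (forall j, P.-integrable D (fun w => (g w j)%:E)) ->
  exists s : seq (R * Om), [/\ forall x, x \in s -> 0 <= x.1 /\ D x.2,
     \sum_(x <- s) x.1 = 1 &
     forall j, \sum_(x <- s) x.1 * g x.2 j = fine (\int[P]_(w in D) (g w j)%:E)].
Proof.
elim: n D g => [|n IH] D g mD PD gi.
  have [w Dw] := nonempty_full PD.
  exists [:: (1, w)]; split.
  - by move=> x; rewrite inE => /eqP -> /=.
  - by rewrite big_seq1.
  - by move=> [].
pose m j := fine (\int[P]_(w in D) (g w j)%:E).
pose Cn := fun v : 'I_n.+1 -> R => exists s : seq (R * Om),
  [/\ forall x, x \in s -> 0 <= x.1 /\ D x.2, 0 < \sum_(x <- s) x.1 &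
      forall j, v j = \sum_(x <- s) x.1 * (g x.2 j - m j)].
have Cadd x y : Cn x -> Cn y -> Cn (fun i => x i + y i).
  move=> [s1 [s10 s1p s1e]] [s2 [s20 s2p s2e]]; exists (s1 ++ s2); split.
  - by move=> z; rewrite mem_cat => /orP [/s10|/s20].
  - by rewrite big_cat /=; apply: addr_gt0.
  - by move=> j; rewrite big_cat /= s1e s2e.
have Cscale t x : 0 < t -> Cn x -> Cn (fun i => t * x i).
  move=> t0 [s [s0 sp se]]; exists [seq (t * z.1, z.2) | z <- s]; split.
  - move=> z /mapP [z' /s0 [z'0 Dz'] ->] /=; split => //.
    by apply: mulr_ge0 => //; apply: ltW.
  - by rewrite big_map /= -mulr_sumr mulr_gt0.
  - by move=> j; rewrite big_map se mulr_sumr; apply: eq_bigr => z _; rewrite mulrA.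
have Cpt w : D w -> Cn (fun j => g w j - m j).
  move=> Dw; exists [:: (1, w)]; split.
  - by move=> x; rewrite inE => /eqP -> /=.
  - by rewrite big_seq1.
  - by move=> j; rewrite big_seq1 mul1r.
have [w0 Dw0] := nonempty_full PD.
have [[v [[s [s0 sp se]] v0]]|nz] :=
    pselect (exists v, Cn v /\ forall i, v i = 0).
  set W := \sum_(x <- s) x.1 in sp se.
  exists [seq (z.1 / W, z.2) | z <- s]; split.
  - move=> z /mapP [z' /s0 [z'0 Dz'] ->] /=; split => //.
    by apply: divr_ge0 => //; apply: ltW.
  - by rewrite big_map /= -mulr_suml mulfV // gt_eqF.
  - move=> j; rewrite big_map /=.
    have := se j; rewrite v0.
    have -> : \sum_(x <- s) x.1 * (g x.2 j - m j) =
              \sum_(x <- s) x.1 * g x.2 j - W * m j.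
      rewrite /W mulr_suml -sumrB; apply: eq_bigr => z _; ring.
    move=> /eqP; rewrite eq_sym subr_eq0 => /eqP h.
    rewrite -/(m j).
    have -> : \sum_(i <- s) i.1 / W * g i.2 j = (\sum_(x <- s) x.1 * g x.2 j) / W.
      by rewrite mulr_suml; apply: eq_bigr => z _; ring.
    by rewrite h mulrC mulKf // gt_eqF.
have Cnz x : Cn x -> exists i, x i != 0.
  move=> Cx; apply: contrapT => H; apply: nz; exists x; split => // i.
  by apply/eqP; apply: contrapT => h; apply: H; exists i; apply/negP.
case: (sep Cadd Cscale Cnz) => [Cempty|[u [[i0 ui0] upos]]].
  by exfalso; apply: (Cempty _ (Cpt _ Dw0)).
pose h w := \sum_(j < n.+1) u j * (g w j - m j).
have h0 w : D w -> 0 <= h w by move=> Dw; exact: (upos _ (Cpt _ Dw)).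
have mg j : measurable_fun D (fun w => g w j).
  by apply/measurable_EFinP; exact: (measurable_int _ (gi j)).
have mh : measurable_fun D h.
  apply: measurable_sum => j; apply: measurable_funM => //.
  by apply: measurable_funB => //.
have gm j : (\int[P]_(w in D) (g w j)%:E = (m j)%:E)%E.
  by rewrite /m fineK //; apply: integrable_fin_num.
have ih : (\int[P]_(w in D) (h w)%:E = 0)%E.
  have -> : (fun w => (h w)%:E) =
      (fun w => (\sum_(j < n.+1) ((u j)%:E * ((g w j)%:E - (m j)%:E)%E)%E)%E).
    by apply/funext => w; rewrite /h -sumEFin; apply: eq_bigr => j _; rewrite EFinM EFinB.
  have iB j : P.-integrable D (fun w => ((g w j)%:E - (m j)%:E)%E).
    apply: (integrableB _ (gi j)) => //.
    exact: finite_measure_integrable_cst.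
  rewrite integral_sum //; last by move=> j; apply: integrableZl.
  apply: big1 => j _; rewrite integralZl //.
  rewrite (integralB_EFin (f1 := fun w => g w j) (f2 := fun _ => m j)) //;
    [|exact: gi|exact: finite_measure_integrable_cst].
  by rewrite gm integral_cst //= PD mule1 subee // mule0.
have [N [mN PN subN]] : ae_eq P D (fun w => (h w)%:E) (cst 0%E).
  apply/ae_eq_integral_abs => //; first by apply/measurable_EFinP.
  rewrite -ih; apply: eq_integral => w /[!inE] Dw; rewrite gee0_abs //.
  by rewrite lee_fin; apply: h0.
pose D' := D `\` N.
have mD' : measurable D' by apply: measurableD.
have PD' : P D' = 1%E.
  have PDc : (P : {content set Om -> \bar R}) D = 1%E := PD.
  rewrite /D' measureD //; last by rewrite PDc ltry.
  rewrite PDc (@subset_measure0 _ _ _ P (D `&` N) N) ?sube0 //.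
  by apply: measurableI.
have hD' w : D' w -> h w = 0.
  move=> [Dw Nw]; apply: contrapT => hw; apply: Nw; apply: subN => /=.
  by move=> /(_ Dw) [].
pose g' w (j : 'I_n) := g w (lift i0 j).
have gi' j : P.-integrable D' (fun w => (g' w j)%:E).
  by apply: (integrableS mD) => //; [exact: subDsetl| exact: gi].
have [s [s0 s1 se]] := IH D' g' mD' PD' gi'.
exists s; split => //.
  by move=> x /s0 [x0 [Dx _]].
have se' j : \sum_(x <- s) x.1 * g x.2 (lift i0 j) = m (lift i0 j).
  rewrite se /m; congr fine; rewrite /g' /D'.
  by rewrite -negligible_integral //.
pose a j := \sum_(x <- s) x.1 * g x.2 j.
have E1 : \sum_(x <- s) x.1 * h x.2 = \sum_j u j * (a j - m j).
  transitivity (\sum_(x <- s) \sum_j x.1 * (u j * (g x.2 j - m j))).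
    by apply: eq_bigr => x _; rewrite /h mulr_sumr.
  rewrite exchange_big; apply: eq_bigr => j _ /=.
  have -> : u j * (a j - m j) = u j * (a j - m j * \sum_(x <- s) x.1).
    by rewrite s1 mulr1.
  rewrite /a mulr_sumr -sumrB mulr_sumr; apply: eq_bigr => x _; ring.
have E0 : \sum_(x <- s) x.1 * h x.2 = 0.
  rewrite big_seq; apply: big1 => x /s0 [_ Dx]; rewrite hD' // mulr0 //.
have Ei0 : a i0 = m i0.
  move: E1; rewrite E0 (bigD1_ord i0) //=.
  rewrite big1 => [|j _]; last by rewrite /a se' subrr mulr0.
  rewrite addr0 => /esym /eqP; rewrite mulf_eq0 (negbTE ui0) /= subr_eq0 => /eqP //.
move=> j; case: (unliftP i0 j) => [j' ->|->].
  exact: se'.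
exact: Ei0.
Qed.
End Hull.
Section Disc.
Variable R : realType.
Context {dd : measure_display} (T : measurableType dd).
Variables (n : nat) (th : 'I_n.+1 -> R) (y : 'I_n.+1 -> T).
Hypothesis th0 : forall l, 0 <= th l.
Hypothesis th1 : \sum_l th l = 1.

Definition dmu := msum (fun l : nat => mscale (`|th (inord l)|)%:nng
   (@dirac _ T (y (inord l)) R)) n.+1.

Lemma dmuE U : dmu U = (\sum_l th l * (y l \in U)%:R)%:E.
Proof.
rewrite /dmu /msum /= -sumEFin; apply: eq_bigr => l _.
by rewrite /mscale /= diracE inord_val ger0_norm // EFinM.
Qed.

Lemma dmuT : dmu setT = 1%E.
Proof.
rewrite dmuE (eq_bigr th) ?th1 // => l _.
by rewrite in_setT mulr1.
Qed.

Definition dP : probability T R := mnormalize dmu (@dirac _ T (y ord0) R).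

Lemma dPE U : dP U = dmu U.
Proof.
rewrite /dP [LHS]/(mnormalize _ _ U).
case: ifPn => /=.
  by rewrite -/(dmu [set: T]) dmuT eqe oner_eq0.
by rewrite -/(dmu [set: T]) dmuT /= invr1 mule1.
Qed.

Lemma dint_ge0 (D : set T) (h : T -> R) : measurable D -> (forall l, D (y l)) -> measurable_fun D h ->
  (forall x, D x -> 0 <= h x) ->
  (\int[dP]_(x in D) (h x)%:E = (\sum_l th l * h (y l))%:E)%E.
Proof.
move=> mD Dy mh h0.
rewrite (eq_measure_integral dmu); last by move=> A _ _; exact: dPE.
have h0' : forall x, D x -> (0 <= (h x)%:E)%E by move=> x Dx; rewrite lee_fin; apply: h0.
have mh' : measurable_fun D (fun x => (h x)%:E) by apply/measurable_EFinP.
rewrite (ge0_integral_measure_sum _ mD h0' mh').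
rewrite -sumEFin; apply: eq_bigr => l _.
rewrite (ge0_integral_mscale _ mD _ mh' h0').
rewrite integral_dirac //.
by rewrite diracE mem_set ?inord_val // mul1e /= ger0_norm // EFinM.
Qed.

Lemma dint (D : set T) (g : T -> R) : measurable D -> (forall l, D (y l)) -> measurable_fun D g ->
  dP.-integrable D (fun x => (g x)%:E) /\
  fine (\int[dP]_(x in D) (g x)%:E) = \sum_l th l * g (y l).
Proof.
move=> mD Dy mg.
pose g1 x := Num.max (g x) 0. pose g2 x := Num.max (- g x) 0.
have mg1 : measurable_fun D g1.
  exact: (measurable_maxr mg (measurable_cst (0:R))).
have mg2 : measurable_fun D g2.
  have mng : measurable_fun D (fun x => - g x) by exact: measurableT_comp.
  exact: (measurable_maxr mng (measurable_cst (0:R))).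
have g10 x : D x -> 0 <= g1 x by move=> _; rewrite /g1 le_max lexx orbT.
have g20 x : D x -> 0 <= g2 x by move=> _; rewrite /g2 le_max lexx orbT.
have ig (h : T -> R) : measurable_fun D h -> (forall x, D x -> 0 <= h x) ->
    dP.-integrable D (EFin \o h).
  move=> mh h0; apply/integrableP; split; first by apply/measurable_EFinP.
  rewrite (eq_integral (fun x => (h x)%:E)); last first.
    by move=> x /[!inE] Dx /=; rewrite ger0_norm //; apply: h0.
  by rewrite dint_ge0 // ltry.
have gE x : g x = g1 x - g2 x.
  rewrite /g1 /g2 !maxEle; do 2 case: ifPn; lra.
have -> : (fun x => (g x)%:E) = (fun x => ((g1 x)%:E - (g2 x)%:E)%E).
  by apply/funext => x; rewrite gE EFinB.
split.
  by apply: integrableB => //; apply: ig.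
rewrite integralB_EFin //; [|exact: ig|exact: ig].
rewrite !dint_ge0 // -EFinB /= -sumrB; apply: eq_bigr => l _.
by rewrite gE mulrBr.
Qed.
End Disc.

Section Main.
Variables (R : realType) (d k : nat).
Variables (A C : set (d.-tuple R)) (B : set (k.-tuple R)) (f : d.-tuple R -> k.-tuple R).
Hypotheses (mA : measurable A) (mf : measurable_fun A f) (mC : measurable C) (CA : C `<=` A).

Let M := \big[Num.max/0]_(i < k.+1) Pval A C B f i.+1.

Lemma sup01 (E : set R) : (forall x, E x -> 0 <= x <= 1) ->
  [/\ 0 <= sup E, sup E <= 1 & forall x, E x -> x <= sup E].
Proof.
move=> E01.
have [[x0 Ex0]|nE] := pselect (exists x, E x); last first.
  have -> : E = set0 by apply/seteqP; split => // x Ex; apply: nE; exists x.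
  by rewrite sup0; split => //.
have ub : has_ubound E by exists 1 => x /E01 /andP [].
have hx x : E x -> x <= sup E by move=> Ex; apply: ub_le_sup.
split => //.
- by apply: le_trans (hx _ Ex0); case/andP: (E01 _ Ex0).
- by apply: ge_sup; [exists x0 | move=> x /E01 /andP []].
Qed.

Lemma Pi01 i s : Pi_values A C B f i s -> 0 <= s <= 1.
Proof.
move=> [th [y [th0 [_ _ th1 _ ->]]]].
apply/andP; split; first by apply: sumr_ge0.
rewrite -th1 [X in _ <= X](bigID (fun l : 'I_k.+1 => (l < i)%N)) /=.
by rewrite lerDl; apply: sumr_ge0.
Qed.

Lemma Pval_props i : [/\ 0 <= Pval A C B f i, Pval A C B f i <= 1 &
  forall s, Pi_values A C B f i s -> s <= Pval A C B f i].
Proof. exact: sup01 (@Pi01 i). Qed.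

Lemma M_ge (i : 'I_k.+1) : Pval A C B f i.+1 <= M.
Proof. exact: (le_bigmax _ (fun i : 'I_k.+1 => Pval A C B f i.+1) i). Qed.

Lemma M_ge0 : 0 <= M.
Proof. by apply: le_trans (M_ge ord0); case: (Pval_props 1). Qed.

Lemma prob01 p : prob_values A C B f p -> 0 <= p <= 1.
Proof.
move=> [dd [Om [P [X [mX PA iX BX ->]]]]].
have mXC : measurable (X @^-1` C) by rewrite -[X @^-1` C]setTI; apply: mX.
apply/andP; split; first by apply: fine_ge0; apply: measure_ge0.
have := probability_le1 P mXC.
have : (P (X @^-1` C)) \is a fin_num by rewrite ge0_fin_numE ?measure_ge0 // (le_lt_trans (probability_le1 P mXC)) ?ltry.
move=> hf h; have := fine_le hf _ h; rewrite /= => ->//.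
Qed.

Lemma Pi_in_prob i s : Pi_values A C B f i s -> prob_values A C B f s.
Proof.
move=> [th [y [th0 [yC yAC th1 hB ->]]]].
have yA l : A (y l).
  by case: (ltnP l i) => h; [apply: CA; apply: yC | case: (yAC _ h)].
have mtf j : measurable_fun A (fun x => tnth (f x) j).
  exact: (measurableT_comp (measurable_tnth j) mf).
exists _, (d.-tuple R), (dP th y), id; split.
- exact: measurable_id.
- rewrite (dPE _ th0 th1) (dmuE _ th0) (eq_bigr th) ?th1 // => l _.
  by rewrite mem_set ?mulr1 //; apply: yA.
- by move=> j; case: (dint th0 th1 mA yA (mtf j)).
- rewrite /expect_vec; move: hB; congr B; apply: eq_mktuple => j.
  by case: (dint th0 th1 mA yA (mtf j)) => _ ->.
- rewrite (dPE _ th0 th1) (dmuE _ th0) /= big_mkcond /=; apply: eq_bigr => l _.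
  case: ifPn => h.
    by rewrite mem_set ?mulr1 //; apply: yC.
  rewrite memNset ?mulr0 //; rewrite -leqNgt in h.
  by case: (yAC _ h).
Qed.
Lemma toPval (i : 'I_k.+1) th y : (forall l, 0 <= th l) ->
  (forall l : 'I_k.+1, (l < i.+1)%N -> C (y l)) ->
  (forall l : 'I_k.+1, (i.+1 <= l)%N -> (A `\` C) (y l)) ->
  \sum_l th l = 1 ->
  B [tuple \sum_(l < k.+1) th l * tnth (f (y l)) j | j < k] ->
  \sum_(l < k.+1 | (l < i.+1)%N) th l <= M.
Proof.
move=> th0 yC yAC th1 hB; apply: le_trans (M_ge i).
case: (Pval_props i.+1) => _ _; apply.
by exists th, y; split.
Qed.

Lemma toPval_seq (t : seq (R * d.-tuple R)) (i : nat) : size t = k.+1 ->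
  (0 < i <= k.+1)%N -> (forall x, x \in t -> 0 <= x.1) ->
  (forall x, x \in take i t -> C x.2) ->
  (forall x, x \in drop i t -> (A `\` C) x.2) ->
  \sum_(x <- t) x.1 = 1 ->
  B [tuple \sum_(x <- t) x.1 * tnth (f x.2) j | j < k] ->
  \sum_(x <- take i t) x.1 <= M.
Proof.
case: i => [//|i] st /andP [_ ik] t0 tC tAC t1 tB.
pose x0 : R * d.-tuple R := (0, [tuple (0:R) | _ < d]).
pose th (l : 'I_k.+1) := (nth x0 t l).1.
pose y (l : 'I_k.+1) := (nth x0 t l).2.
have sumt (F : R * d.-tuple R -> R) :
    \sum_(x <- t) F x = \sum_(l < k.+1) F (nth x0 t l).
  by rewrite (big_nth x0) st big_mkord.
have -> : \sum_(x <- take i.+1 t) x.1 = \sum_(l < k.+1 | (l < i.+1)%N) th l.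
  rewrite (big_nth x0) size_takel ?st // big_mkord.
  transitivity (\sum_(l < i.+1) (nth x0 t l).1).
    by apply: eq_bigr => l _; rewrite nth_take.
  exact: (big_ord_widen k.+1 (fun l => (nth x0 t l).1)).
apply: (@toPval (Ordinal ik) th y).
- by move=> l; apply: t0; apply: mem_nth; rewrite st.
- move=> l /= hl; apply: tC; rewrite /y -(nth_take x0 hl).
  by apply: mem_nth; rewrite size_takel ?st.
- move=> l /= hl; apply: tAC; rewrite /y.
  have -> : (l : nat) = (i.+1 + (l - i.+1))%N by rewrite subnKC.
  rewrite -nth_drop; apply: mem_nth; rewrite size_drop st.
  by apply: ltn_sub2r => //; apply: (leq_ltn_trans hl).
- by rewrite -t1 sumt.
- by move: tB; congr B; apply: eq_mktuple => j; rewrite sumt.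
Qed.

Lemma pad (s : seq (R * d.-tuple R)) : (forall x, x \in s -> 0 <= x.1 /\ A x.2) ->
  (size s <= k.+1)%N -> \sum_(x <- s) x.1 = 1 ->
  B [tuple \sum_(x <- s) x.1 * tnth (f x.2) j | j < k] ->
  \sum_(x <- s) x.1 * \1_C x.2 <= M.
Proof.
move=> s0 ss s1 sB.
set cs := [seq x <- s | x.2 \in C].
set ncs := [seq x <- s | x.2 \notin C].
have -> : \sum_(x <- s) x.1 * \1_C x.2 = \sum_(x <- cs) x.1.
  rewrite big_filter [RHS]big_mkcond /=; apply: eq_bigr => x _.
  by rewrite indicE; case: ifP => _; rewrite ?mulr1 ?mulr0.
have hp : perm_eq (cs ++ ncs) s.
  by rewrite (perm_filterC (fun x : R * d.-tuple R => x.2 \in C)) perm_refl.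
have sumcn (F : R * d.-tuple R -> R) :
    \sum_(x <- cs ++ ncs) F x = \sum_(x <- s) F x by apply: perm_big.
have szcn : (size cs + size ncs)%N = size s by rewrite -size_cat (perm_size hp).
have ncs0 : 0 <= \sum_(x <- ncs) x.1.
  rewrite big_seq; apply: sumr_ge0 => x; rewrite mem_filter => /andP [_ /s0 []] //.
have cs_le : \sum_(x <- cs) x.1 <= 1.
  by rewrite -s1 -(sumcn (fun x => x.1)) big_cat /= lerDl.
have [cs0|[x1 x1c]] : cs = [::] \/ exists x1, x1 \in cs.
  by case: (cs) => [|x1 ?]; [left|right; exists x1; rewrite mem_head].
  by rewrite cs0 big_nil; exact: M_ge0.
have x1C : C x1.2 by move: x1c; rewrite mem_filter => /andP [/set_mem].
have x1s : x1 \in s by move: x1c; rewrite mem_filter => /andP [].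
have nseq0 (z : d.-tuple R) n (F : R * d.-tuple R -> R) : (forall y, F (0, y) = 0) ->
    \sum_(x <- nseq n (0, z)) F x = 0.
  by move=> F0; rewrite big_seq big1 // => x /nseqP [-> _].
have [[z [Az nCz]]|noz] := pselect (exists z, A z /\ ~ C z).
  pose t := cs ++ ncs ++ nseq (k.+1 - size s) (0, z).
  have st : size t = k.+1.
    by rewrite /t !size_cat size_nseq addnA szcn subnKC.
  have hcs : (size cs <= size s)%N by rewrite -szcn leq_addr.
  have := @toPval_seq t (size cs) st.
  rewrite /t take_size_cat // drop_size_cat //; apply.
  - apply/andP; split; last exact: (leq_trans hcs ss).
    by case: (cs) x1c => //.
  - move=> x; rewrite !mem_cat => /orP [|/orP []].
    + by rewrite mem_filter => /andP [_ /s0 []].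
    + by rewrite mem_filter => /andP [_ /s0 []].
    + by move=> /nseqP [-> _].
  - by move=> x; rewrite mem_filter => /andP [/set_mem].
  - move=> x; rewrite mem_cat => /orP [].
      rewrite mem_filter => /andP [hC /s0 [_ hA]]; split => //.
      by move=> hC'; move: hC; rewrite mem_set.
    by move=> /nseqP [-> _].
  - rewrite catA big_cat /= (sumcn (fun x => x.1)) s1.
    by rewrite (nseq0 _ _ (fun x => x.1)) ?addr0.
  - move: sB; congr B; apply: eq_mktuple => j.
    rewrite catA big_cat /= (sumcn (fun x => x.1 * tnth (f x.2) j)).
    by rewrite (nseq0 _ _ (fun x => x.1 * tnth (f x.2) j)) ?addr0 // => y; rewrite mul0r.
pose t := s ++ nseq (k.+1 - size s) (0, x1.2).
have st : size t = k.+1 by rewrite /t size_cat size_nseq subnKC.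
apply: le_trans cs_le _.
have := @toPval_seq t k.+1 st.
rewrite take_oversize ?st // drop_oversize ?st //.
have t1 : \sum_(x <- t) x.1 = 1.
  by rewrite big_cat /= (nseq0 _ _ (fun x => x.1)) ?addr0.
rewrite t1; apply.
- by rewrite leqnn.
- by move=> x; rewrite mem_cat => /orP [/s0 []|/nseqP [-> _]].
- move=> x; rewrite mem_cat => /orP [/s0 [_ hA]|/nseqP [-> _] //].
  by apply: contrapT => hC; apply: noz; exists x.2.
- by [].
- by [].
- move: sB; congr B; apply: eq_mktuple => j.
  by rewrite big_cat /= (nseq0 _ _ (fun x => x.1 * tnth (f x.2) j)) ?addr0 // => y; rewrite mul0r.
Qed.
Lemma prob_le p : prob_values A C B f p -> p <= M.
Proof.
move=> [dd [Om [P [X [mX PA iX BX ->]]]]].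
set D := X @^-1` A.
have mD : measurable D by rewrite /D -[X @^-1` A]setTI; apply: mX.
have mXC : measurable (X @^-1` C) by rewrite -[X @^-1` C]setTI; apply: mX.
pose g (w : Om) (i : 'I_k.+1) : R :=
  if unlift ord0 i is Some j then tnth (f (X w)) j else \1_(X @^-1` C) w.
have gi i : P.-integrable D (fun w => (g w i)%:E).
  case: (unliftP ord0 i) => [j ->|->]; rewrite /g ?liftK ?unlift_none.
    exact: iX.
  apply: (integrableS measurableT mD) => //.
  exact: integrable_indic.
have [s [s0 s1 se]] := hull mD PA gi.
pose s2 := [seq (x.1, X x.2) | x <- s].
have s20 x : x \in s2 -> 0 <= x.1.
  by rewrite /s2 => /mapP [x' /s0 [h _] ->].
have [s' [s'0 s'size s'sum s'v s'c]] :=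
  reduce (fun y j => tnth (f y) j) (fun y => \1_C y) s20.
have sum2 (F : R * d.-tuple R -> R) :
    \sum_(x <- s2) F x = \sum_(x <- s) F (x.1, X x.2) by rewrite big_map.
have hp : fine (P (X @^-1` C)) = \sum_(x <- s2) x.1 * \1_C x.2.
  rewrite sum2; have := se ord0; rewrite /g unlift_none integral_indic //.
  rewrite setIidl; last by move=> w /CA.
  by move=> <-; apply: eq_bigr => x _ /=; congr (_ * _).
rewrite hp; apply: le_trans s'c _; apply: pad => //.
- move=> x /s'0 [x0 /mapP [y /mapP [w /s0 [_ Dw] ->] ->]]; split => //.
- by rewrite s'sum sum2.
- move: BX; rewrite /expect_vec; congr B; apply: eq_mktuple => j.
  rewrite s'v sum2 /=.
  by have := se (lift ord0 j); rewrite /g liftK => ->.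
Qed.
End Main.


Unset Implicit Arguments.
Theorem theorem5 (R : realType) (d k : nat) (hd : (0 < d)%N) (hk : (0 < k)%N)
  (A C : set (d.-tuple R)) (B : set (k.-tuple R))
  (f : d.-tuple R -> k.-tuple R)
  (mA : measurable A) (mB : measurable B) (mf : measurable_fun A f)
  (mC : measurable C) (CA : C `<=` A) :
  sup (prob_values A C B f) =
  \big[Num.max/0]_(i < k.+1) Pval A C B f i.+1.
Proof.
have [S0 S1 Sub] := sup01 (@prob01 R d k A C B f mC).
apply/eqP; rewrite eq_le; apply/andP; split.
  have [[p0 Sp0]|nS] := pselect (exists p, prob_values A C B f p); last first.
    have -> : prob_values A C B f = set0.
      by apply/seteqP; split => // x Sx; apply: nS; exists x.
    by rewrite sup0; apply: M_ge0.
  apply: ge_sup; first by exists p0.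
  by move=> p /(prob_le mA mC CA).
apply: bigmax_le => // i _.
case: (Pval_props A C B f i.+1) => P0 P1 Pub.
have [[s0 Ps0]|nP] := pselect (exists s, Pi_values A C B f i.+1 s); last first.
  rewrite /Pval; have -> : Pi_values A C B f i.+1 = set0.
    by apply/seteqP; split => // x Sx; apply: nP; exists x.
  by rewrite sup0.
rewrite /Pval; apply: ge_sup; first by exists s0.
move=> s Ps; apply: Sub.
exact: (Pi_in_prob mA mf CA Ps).
Qed.
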